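(* Let $\mu$ be a probability measure on $\mathbb{R}^p$ supported on a compact set $S$ such that $\mathrm{diam}(\mathrm{conv}(S))>0$. Then for every positive integer $d$ and every $\mathbf{x}\in\mathbb{R}^p$, \[\Lambda_{\mu,d}(\mathbf{x})\le\left(\frac{\mathrm{diam}(\mathrm{conv}(S))}{\mathrm{dist}(\mathbf{x},\mathrm{conv}(S))+\mathrm{diam}(\mathrm{conv}(S))}\right)^2.\]
   Context: $\mathrm{conv}(S)$ is the convex hull of $S$ and $\mathrm{diam}$ the diameter. For a finite Borel measure $\nu$ with finite moments, the Christoffel function is $\Lambda_{\nu,d}(\xi)=\min\{\int P^2\,d\nu: P\in\mathbb{R}[X]_d,\ P(\xi)=1\}$, where $\mathbb{R}[X]_d$ is the space of real polynomials in $p$ variables of total degree at most $d$. *)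

(* Defs.v *)
From HB Require Import structures.
From mathcomp Require Import all_boot all_order all_algebra.
From mathcomp Require Import all_classical all_reals all_analysis.
From mathcomp Require mpoly.

Set Implicit Arguments.
Unset Strict Implicit.
Unset Printing Implicit Defensive.

Import Order.TTheory GRing.Theory Num.Theory.
Import numFieldNormedType.Exports.
Local Open Scope classical_set_scope.
Local Open Scope ring_scope.

(* R^p is modelled as [p.-tuple R], which carries the product (= Borel)
   sigma-algebra of mathcomp-analysis.  For geometry (linear structure,
   topology) points are transported to row vectors ['rV[R]_p]. *)
Definition tvec {R : realType} {p : nat} (x : p.-tuple R) : 'rV[R]_p :=
  \row_(i < p) tnth x i.

Definition euc_norm {R : realType} {p : nat} (v : 'rV[R]_p) : R :=
  Num.sqrt (\sum_(i < p) v ord0 i ^+ 2).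

Definition conv_hull {R : realType} {p : nat} (A : set 'rV[R]_p) : set 'rV[R]_p :=
  [set x | exists (n : nat) (w : 'I_n -> R) (y : 'I_n -> 'rV[R]_p),
      (forall i, 0 <= w i) /\ \sum_(i < n) w i = 1 /\
      (forall i, A (y i)) /\ x = \sum_(i < n) w i *: y i].

Definition euc_diam {R : realType} {p : nat} (A : set 'rV[R]_p) : R :=
  sup [set euc_norm (x - y) | x in A & y in A].

Definition euc_dist {R : realType} {p : nat} (x : 'rV[R]_p) (A : set 'rV[R]_p) : R :=
  inf [set euc_norm (x - y) | y in A].

Definition peval {R : realType} {p : nat} (P : mpoly.mpoly p R) (x : p.-tuple R) : R :=
  mpoly.meval (fun i => tnth x i) P.

Definition deg_le {R : realType} {p : nat} (d : nat) (P : mpoly.mpoly p R) : bool :=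
  all (fun m => (mpoly.mdeg m <= d)%N) (mpoly.msupp P).

(* Christoffel function:
   Lambda_{mu,d}(xi) = min { \int P^2 dmu : P in R[X]_d, P(xi) = 1 }
   (taken as an infimum in the extended reals). *)
Definition christoffel {R : realType} {p : nat}
  (mu : {measure set (p.-tuple R) -> \bar R}) (d : nat) (xi : p.-tuple R) : \bar R :=
  ereal_inf [set (\int[mu]_x ((peval P x) ^+ 2)%:E)%E
            | P in [set P : mpoly.mpoly p R | deg_le d P /\ peval P xi = 1]].

(* Main.v *)
Require Import Defs.
From HB Require Import structures.
From mathcomp Require Import all_boot all_order all_algebra.
From mathcomp Require Import all_classical all_reals all_analysis.
From mathcomp Require mpoly.
From mathcomp Require Import measurable_realfun.
From mathcomp Require Import ring lra.
Import (canonicals, coercions, hints) mpoly.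

Import Order.TTheory GRing.Theory Num.Theory.
Import numFieldNormedType.Exports.
Local Open Scope classical_set_scope.
Local Open Scope ring_scope.

Lemma affine_poly (R : realType) p (c : 'I_p -> R) (c0 : R) :
  exists P : mpoly.mpoly p R, deg_le 1 P /\
    forall x, peval P x = c0 + \sum_i c i * tnth x i.
Proof.
exists (mpoly.mpolyC p c0 + \sum_i c i *: mpoly.mpolyX R (mpoly.mnm1 i)).
split.
  apply/allP => m /mpoly.msize_mdeg_lt lt.
  rewrite -ltnS; apply: leq_trans lt _.
  have h1 := mpoly.msizeD_le (mpoly.mpolyC p c0) (\sum_i c i *: mpoly.mpolyX R (mpoly.mnm1 i)). apply: (leq_trans h1).
  rewrite geq_max; apply/andP; split.
    by rewrite mpoly.msizeC; case: (_ != _).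
  have h2 := mpoly.msize_sum (index_enum 'I_p) (fun i => c i *: mpoly.mpolyX R (mpoly.mnm1 i)) xpredT.
  apply: (leq_trans h2).
  apply/bigmax_leqP => i _.
  have h3 := mpoly.msizeZ_le (mpoly.mpolyX R (mpoly.mnm1 i)) (c i).
  apply: (leq_trans h3).
  by rewrite mpoly.msizeX mpoly.mdeg1.
move=> x; rewrite /peval mpoly.mevalD mpoly.mevalC.
congr (_ + _).
rewrite (big_morph _ (mpoly.mevalD _) (mpoly.meval0 _)).
by apply: eq_bigr => i _; rewrite mpoly.mevalZ mpoly.mevalXU.
Qed.

Lemma int_bound (R : realType) p (mu : probability (p.-tuple R) R) (S : set (p.-tuple R))
  (mS : measurable S) (h0 : mu (~` S) = 0%E) (f : p.-tuple R -> R)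
  (mf : measurable_fun setT f) (B : R) :
  (forall y, S y -> f y ^+ 2 <= B) ->
  (\int[mu]_x ((f x) ^+ 2)%:E <= B%:E)%E.
Proof.
move=> hB.
have B0 : 0 <= B.
  have : S !=set0.
    apply/set0P/negP => /eqP S0.
    move: h0; rewrite S0 setC0 probability_setT => /eqP; rewrite onee_eq0.
    done.
  by case=> y Sy; apply: le_trans (hB y Sy); exact: sqr_ge0.
apply: (@le_trans _ _ (\int[mu]_x (cst B%:E) x)%E).
  apply: ae_ge0_le_integral => //.
  - by move=> x _; rewrite lee_fin sqr_ge0.
  - apply/measurable_EFinP; apply: measurable_funX; exact: mf.
  - exists (~` S); split => //; first exact: measurableC.
    move=> x /= hx Sx; apply: hx => _.
    by rewrite lee_fin hB.
rewrite integral_cst //.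
rewrite (_ : (B%:E * _ = B%:E)%E) //; rewrite -[RHS]mule1; congr (_ * _)%E.
exact: probability_setT.
Qed.
Definition dot {R : realType} {p : nat} (u v : 'rV[R]_p) : R :=
  \sum_(i < p) u ord0 i * v ord0 i.

Section Dot.
Context {R : realType} {p : nat}.
Implicit Types (u v w : 'rV[R]_p).

Lemma dot_comb (a b : 'rV[R]_p) (s t : R) :
  dot (s *: a + t *: b) (s *: a + t *: b) =
  s ^+ 2 * dot a a + 2 * s * t * dot a b + t ^+ 2 * dot b b.
Proof.
rewrite /dot !mulr_sumr -!big_split /=; apply: eq_bigr => i _; rewrite !mxE; ring.
Qed.

Lemma dotZl (s : R) u v : dot (s *: u) v = s * dot u v.
Proof. by rewrite /dot mulr_sumr; apply: eq_bigr => i _; rewrite !mxE mulrA. Qed.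

Lemma dotBr u v w : dot u (v - w) = dot u v - dot u w.
Proof.
rewrite /dot -sumrB; apply: eq_bigr => i _; rewrite !mxE; ring.
Qed.

Lemma dot_ge0 u : 0 <= dot u u.
Proof. by apply: sumr_ge0 => i _; rewrite -expr2 sqr_ge0. Qed.

Lemma en_sq u : euc_norm u ^+ 2 = dot u u.
Proof.
rewrite /euc_norm sqr_sqrtr; last by apply: sumr_ge0 => i _; exact: sqr_ge0.
by apply: eq_bigr => i _; rewrite expr2.
Qed.

Lemma en_ge0 u : 0 <= euc_norm u.
Proof. exact: sqrtr_ge0. Qed.

End Dot.

Lemma geom (R : realType) p (C K : set 'rV[R]_p) (x : 'rV[R]_p) (dl D : R) :
  K `<=` C ->
  (forall y z t, K y -> C z -> 0 <= t <= 1 -> C (z + t *: (y - z))) ->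
  (forall u v, C u -> C v -> euc_norm (u - v) <= D) ->
  (forall z, C z -> dl <= euc_norm (x - z)) ->
  (forall e, 0 < e -> exists2 z, C z & euc_norm (x - z) < dl + e) ->
  0 < dl -> 0 < D ->
  forall th, 0 < th -> exists (a : 'rV[R]_p) (c0 : R),
    dot a x + c0 = 1 /\ forall y, K y -> `|dot a y + c0| <= D / (dl + D) + th.
Proof.
move=> KC hconv hD hdl hinf dl0 D0 th th0.
set t := Num.min 1 (th * dl ^+ 2 / D ^+ 2).
have t0 : 0 < t by rewrite lt_min ltr01 /= divr_gt0 // ?mulr_gt0 // exprn_gt0.
have t1 : t <= 1 by rewrite ge_min lexx.
have tD : t * D ^+ 2 <= th * dl ^+ 2.
  rewrite -ler_pdivlMr ?exprn_gt0 //; rewrite ge_min; apply/orP; right.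
  by rewrite mulrA.
set k := t * th * dl ^+ 2.
have k0 : 0 < k by rewrite /k !mulr_gt0 // exprn_gt0.
set eps := Num.min dl (k / (3 * dl)).
have eps0 : 0 < eps by rewrite lt_min dl0 /= divr_gt0 // mulr_gt0.
have epsdl : eps <= dl by rewrite ge_min lexx.
have epsk : eps * (3 * dl) <= k.
  rewrite -ler_pdivlMr ?mulr_gt0 //; rewrite ge_min; apply/orP; right; exact: lexx.
have [z Cz hr] := hinf eps eps0.
set r := euc_norm (x - z) in hr.
have dlr : dl <= r := hdl z Cz.
have r0 : 0 < r by apply: lt_le_trans dlr.
have rk : r ^+ 2 - dl ^+ 2 <= k by nra.
set a := x - z.
have Na : dot a a = r ^+ 2 by rewrite -en_sq.
set M := r ^+ 2 + r * D.
have M0 : 0 < M by rewrite /M addr_gt0 ?mulr_gt0 // exprn_gt0.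
exists (M^-1 *: a), ((r * D - dot a z) / M).
split.
  have hx : dot a x - dot a z = r ^+ 2 by rewrite -dotBr -Na.
  rewrite dotZl (_ : dot a x = r ^+ 2 + dot a z); last by lra.
  by rewrite /M; field; rewrite -/M gt_eqF.
move=> y Ky.
set b := y - z.
have Cy := KC y Ky.
have hb : euc_norm b <= D := hD y z Cy Cz.
have Nb : dot b b <= D ^+ 2.
  rewrite -en_sq; have := en_ge0 b; nra.
have Nb0 : 0 <= dot b b := dot_ge0 b.
have ev : dot (M^-1 *: a) y + (r * D - dot a z) / M = (dot a b + r * D) / M.
  by rewrite dotZl /b dotBr; field; rewrite gt_eqF.
rewrite ev.
have lo : - (r * D) <= dot a b.
  set s := D / r.
  have sr : s * r = D by rewrite /s mulfVK // gt_eqF.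
  have s0 : 0 < s by rewrite divr_gt0.
  have := dot_ge0 (s *: a + 1 *: b); rewrite dot_comb Na => h.
  nra.
have up : dot a b <= th * dl ^+ 2.
  have Cw := hconv y z t Ky Cz (introT andP (conj (ltW t0) t1)).
  have := hdl _ Cw.
  have -> : x - (z + t *: (y - z)) = 1 *: a + (- t) *: b.
    by rewrite /a /b; apply/rowP => i; rewrite !mxE; ring.
  move=> h.
  have h2 : dl ^+ 2 <= dot (1 *: a + (- t) *: b) (1 *: a + (- t) *: b).
    rewrite -en_sq; nra.
  rewrite dot_comb Na in h2.
  have e0 : t ^+ 2 * dot b b <= t ^+ 2 * D ^+ 2 by apply: ler_wpM2l => //; exact: sqr_ge0.
  have e2 : t ^+ 2 * D ^+ 2 <= t * (th * dl ^+ 2) by rewrite expr2 -mulrA; apply: ler_wpM2l => //; exact: ltW.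
  rewrite expr1n mul1r sqrrN mulr1 in h2.
  have e1 : t * dot a b <= t * (th * dl ^+ 2).
    rewrite /k in rk.
    have : 2 * - t * dot a b = - (2 * (t * dot a b)) by ring.
    have : t * th * dl ^+ 2 = t * (th * dl ^+ 2) by ring.
    lra.
  by rewrite -(ler_pM2l t0).
have v0 : 0 <= (dot a b + r * D) / M by apply: divr_ge0; [lra | exact: ltW].
rewrite ger0_norm //.
rewrite ler_pdivrMr //.
set q := D / (dl + D).
have q0 : 0 <= q by rewrite divr_ge0 // ltW // addr_gt0.
have qd : q * (dl + D) = D by rewrite /q mulfVK // gt_eqF // addr_gt0.
have h1 : D <= q * (r + D) by nra.
have h1' : r * D <= q * (r ^+ 2 + r * D).
  have -> : q * (r ^+ 2 + r * D) = r * (q * (r + D)) by ring.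
  by apply: ler_wpM2l => //; exact: ltW.
have h2 : dl ^+ 2 <= r ^+ 2 + r * D.
  have : dl ^+ 2 <= r ^+ 2 by nra.
  have : 0 <= r * D by rewrite mulr_ge0 // ltW.
  lra.
have h2' : th * dl ^+ 2 <= th * (r ^+ 2 + r * D) by apply: ler_wpM2l => //; exact: ltW.
rewrite /M; lra.
Qed.
Lemma conv_sub (R : realType) p (K : set 'rV[R]_p) : K `<=` conv_hull K.
Proof.
move=> y Ky; exists 1%N, (fun _ => 1), (fun _ => y); split => //.
split; first by rewrite big_ord1.
split => //; by rewrite big_ord1 scale1r.
Qed.

Lemma conv_step (R : realType) p (K : set 'rV[R]_p) y z t :
  K y -> conv_hull K z -> 0 <= t <= 1 -> conv_hull K (z + t *: (y - z)).
Proof.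
move=> Ky [n [w [yy [w0 [w1 [Kyy ->]]]]]] /andP[t0 t1].
exists n.+1, (fun i => if unlift ord0 i is Some j then (1 - t) * w j else t),
  (fun i => if unlift ord0 i is Some j then yy j else y).
split.
  move=> i; case: (unlift _ _) => [j|] //; apply: mulr_ge0 => //; lra.
split.
  rewrite big_ord_recl unlift_none.
  under eq_bigr do rewrite liftK.
  by rewrite -mulr_sumr w1; ring.
split.
  by move=> i; case: (unlift _ _).
rewrite big_ord_recl unlift_none.
under [X in _ = _ + X]eq_bigr do rewrite liftK.
rewrite scalerBr.
under [X in _ = _ + X]eq_bigr do rewrite -scalerA.
rewrite -scaler_sumr scalerBl scale1r.
by rewrite addrCA.
Qed.

Lemma meas_affine (R : realType) p (c : 'I_p -> R) (c0 : R) :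
  measurable_fun setT (fun y : p.-tuple R => c0 + \sum_i c i * tnth y i).
Proof.
apply: measurable_funD; first exact: measurable_cst.
apply: measurable_sum => i.
apply: measurable_funM; first exact: measurable_cst.
exact: measurable_tnth.
Qed.

Lemma chr_bound (R : realType) (p : nat)
    (mu : probability (p.-tuple R) R) (S : set (p.-tuple R)) d x
    (mS : measurable S) (h0 : mu (~` S) = 0%E) (d0 : (0 < d)%N)
    (a : 'rV[R]_p) (c0 B : R) :
  dot a (tvec x) + c0 = 1 ->
  (forall y, S y -> `|dot a (tvec y) + c0| <= B) ->
  (christoffel mu d x <= (B ^+ 2)%:E)%E.
Proof.
move=> hx hS.
have [P [degP evP]] := @affine_poly R p (fun i => a ord0 i) c0.
have evP' : forall y, peval P y = dot a (tvec y) + c0.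
  move=> y; rewrite evP addrC /dot; congr (_ + _).
  by apply: eq_bigr => i _; rewrite mxE.
apply: le_trans (ereal_inf_lbound _) _.
  exists P; first split.
  - apply/allP => m /(allP degP) h; exact: leq_trans h d0.
  - by rewrite evP'.
  reflexivity.
apply: (@int_bound _ _ mu S mS h0).
  rewrite (_ : peval P = fun y => c0 + \sum_i a ord0 i * tnth y i).
    exact: meas_affine.
  by apply/funext => y; rewrite evP.
move=> y Sy; rewrite evP' -real_normK ?num_real //.
have := hS y Sy; have := normr_ge0 (dot a (tvec y) + c0); nra.
Qed.

Lemma sq_limit (R : realType) (c : \bar R) (q : R) : 0 <= q ->
  (forall th : R, 0 < th -> (c <= ((q + th) ^+ 2)%:E)%E) ->
  (c <= (q ^+ 2)%:E)%E.
Proof.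
move=> q0 h; apply/lee_addgt0Pr => e e0.
set th := Num.min 1 (e / (2 * q + 1)).
have th0 : 0 < th by rewrite lt_min ltr01 /= divr_gt0 //; lra.
have th1 : th <= 1 by rewrite ge_min lexx.
have the : th * (2 * q + 1) <= e.
  rewrite -ler_pdivlMr; last lra.
  by rewrite ge_min; apply/orP; right.
apply: le_trans (h th th0) _.
rewrite -EFinD lee_fin.
have : th * th <= th * 1 by apply: ler_wpM2l => //; exact: ltW.
nra.
Qed.

Theorem lemma6p8 (R : realType) (p : nat)
    (mu : probability (p.-tuple R) R) (S : set (p.-tuple R)) :
  measurable S ->
  mu (~` S) = 0%E ->
  compact (tvec @` S) ->
  0 < euc_diam (conv_hull (tvec @` S)) ->
  forall (d : nat), (0 < d)%N ->
  forall x : p.-tuple R,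
    (christoffel mu d x <=
      ((euc_diam (conv_hull (tvec @` S)) /
        (euc_dist (tvec x) (conv_hull (tvec @` S)) + euc_diam (conv_hull (tvec @` S)))) ^+ 2)%:E)%E.
Proof.
move=> mS hS _ Dpos d d0 x.
set K := tvec @` S.
set C := conv_hull K.
set E := [set euc_norm (u - v) | u in C & v in C].
have hsup : has_sup E.
  apply: contrapT => nh; move: Dpos.
  by rewrite /euc_diam -/E sup_out // ltxx.
set D := euc_diam C.
have hD : forall u v, C u -> C v -> euc_norm (u - v) <= D.
  move=> u v Cu Cv; apply: (sup_upper_bound hsup).
  by exists u => //; exists v.
have [u0 Cu0] : exists u, C u.
  by case: hsup => -[e [u Cu _]] _; exists u.
set F := [set euc_norm (tvec x - y) | y in C].
have hinf : has_inf F.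
  split; first by exists (euc_norm (tvec x - u0)); exists u0.
  by exists 0 => _ [y _ <-]; exact: en_ge0.
set dl := euc_dist (tvec x) C.
have hdl : forall z, C z -> dl <= euc_norm (tvec x - z).
  move=> z Cz; apply: (ge_inf hinf.2); by exists z.
have dl0 : 0 <= dl.
  apply: lb_le_inf; first by exists (euc_norm (tvec x - u0)); exists u0.
  by move=> _ [y _ <-]; exact: en_ge0.
have hK : forall y, S y -> K (tvec y) by move=> y Sy; exists y.
have [dlz|dlpos] := eqVneq dl 0.
  rewrite dlz add0r divff ?gt_eqF // expr1n.
  rewrite -(expr1n _ 2%N).
  apply: (@chr_bound _ _ mu S d x mS hS d0 0 1 1).
    by rewrite /dot big1 ?add0r // => i _; rewrite mxE mul0r.
  by move=> y _; rewrite /dot big1 ?add0r ?normr1 // => i _; rewrite mxE mul0r.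
have dlp : 0 < dl by rewrite lt_def dlpos dl0.
apply: sq_limit; first by rewrite divr_ge0 ?ltW // addr_gt0.
move=> th th0.
have hinf' : forall e, 0 < e -> exists2 z, C z & euc_norm (tvec x - z) < dl + e.
  move=> e e0.
  have [_ [y Cy <-] ylt] := inf_adherent e0 hinf.
  by exists y.
have [a [c0 [hx hy]]] := @geom R p C K (tvec x) dl D (@conv_sub R p K)
  (fun y z t Ky Cz ht => @conv_step R p K y z t Ky Cz ht) hD hdl
  hinf' dlp Dpos th th0.
apply: (@chr_bound _ _ mu S d x mS hS d0 a c0) => //.
by move=> y Sy; apply: hy; exact: hK.
Qed.
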